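(* Let $G$ be a $(2K_2, C_4)$-free graph on $n$ vertices and let $\ell \ge \chi(G)+1$ be an integer. Then $\mathcal{R}_\ell(G)$ is connected and has diameter at most $4n$.
   Context: All graphs are finite and simple. A $k$-colouring of $G$ is a map $\alpha: V(G)\to\{1,\dots,k\}$ with $\alpha(u)\neq\alpha(v)$ for every edge $uv$; $\chi(G)$ is the chromatic number. The reconfiguration graph $\mathcal{R}_k(G)$ has the $k$-colourings of $G$ as vertices, two being adjacent if they differ on exactly one vertex. A graph is $(H_1,H_2)$-free if it has no induced subgraph isomorphic to $H_1$ or $H_2$; $2K_2$ is the disjoint union of two edges and $C_4$ is the 4-cycle. *)

(* Defs.v *)
From mathcomp Require Import all_boot.
Set Implicit Arguments. Unset Strict Implicit. Unset Printing Implicit Defensive.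

Definition simple_graph (V : finType) (e : rel V) : Prop :=
  symmetric e /\ irreflexive e.

Definition has_induced (W : finType) (h : rel W) (V : finType) (e : rel V) : Prop :=
  exists f : W -> V, injective f /\ forall x y, e (f x) (f y) = h x y.

Definition two_K2 : rel 'I_4 := fun x y =>
  [|| (val x == 0) && (val y == 1), (val x == 1) && (val y == 0),
      (val x == 2) && (val y == 3) | (val x == 3) && (val y == 2)].

Definition C4 : rel 'I_4 := fun x y =>
  ((val x + 1) %% 4 == val y) || ((val y + 1) %% 4 == val x).

Definition proper_col (V : finType) (e : rel V) (k : nat) (f : {ffun V -> 'I_k}) : bool :=
  [forall x, forall y, e x y ==> (f x != f y)].

Definition colorable (V : finType) (e : rel V) (k : nat) : Prop :=
  exists f : {ffun V -> 'I_k}, proper_col e f.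

Definition is_chromatic_number (V : finType) (e : rel V) (k : nat) : Prop :=
  colorable e k /\ forall j, colorable e j -> k <= j.

Definition recol_adj (V : finType) (k : nat) : rel {ffun V -> 'I_k} :=
  fun f g => #|[set v | f v != g v]| == 1.

Definition recol_walk (V : finType) (e : rel V) (k : nat)
  (a : {ffun V -> 'I_k}) (s : seq {ffun V -> 'I_k}) : bool :=
  path (@recol_adj V k) a s && all (@proper_col V e k) (a :: s).

Definition recol_dist_le (V : finType) (e : rel V) (k : nat)
  (a b : {ffun V -> 'I_k}) (d : nat) : Prop :=
  exists s, [/\ recol_walk e a s, last a s = b & size s <= d].

Definition recol_connected (V : finType) (e : rel V) (k : nat) : Prop :=
  forall a b : {ffun V -> 'I_k}, proper_col e a -> proper_col e b ->
    exists s, recol_walk e a s /\ last a s = b.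

Definition recol_diam_le (V : finType) (e : rel V) (k d : nat) : Prop :=
  forall a b : {ffun V -> 'I_k}, proper_col e a -> proper_col e b ->
    recol_dist_le e a b d.

(* Main.v *)
Require Import Defs.
From mathcomp Require Import all_boot zify.
From Stdlib Require Import Classical.
Set Implicit Arguments. Unset Strict Implicit. Unset Printing Implicit Defensive.

Section Reach.
Variables (V : finType) (e : rel V) (l : nat).
Hypothesis esym : symmetric e.
Hypothesis eirr : irreflexive e.

Definition reach (a b : {ffun V -> 'I_l}) d := recol_dist_le e a b d.

Lemma propercP (a : {ffun V -> 'I_l}) :
  reflect (forall x y, e x y -> a x != a y) (proper_col e a).
Proof.
apply: (iffP forallP) => [H x y exy | H x].
  by have /forallP/(_ y)/implyP := H x; apply.
by apply/forallP => y; apply/implyP; apply: H.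
Qed.

Lemma reach0 a : proper_col e a -> reach a a 0.
Proof. by move=> pa; exists [::]; split => //; rewrite /recol_walk /= pa. Qed.

Lemma reach_proper a b d : reach a b d -> proper_col e b.
Proof.
case=> s [/andP[_ /allP Hall] <- _]; apply: Hall; exact: mem_last.
Qed.

Lemma reach_properl a b d : reach a b d -> proper_col e a.
Proof. by case=> s [/andP[_ /allP Hall] _ _]; apply: Hall; rewrite inE eqxx. Qed.

Lemma reach_le a b d d' : d <= d' -> reach a b d -> reach a b d'.
Proof. by move=> le [s [w l1 sz]]; exists s; split => //; apply: leq_trans le. Qed.

Lemma reach_trans a b c d1 d2 : reach a b d1 -> reach b c d2 -> reach a c (d1 + d2).
Proof.
case=> s1 [/andP[p1 a1] l1 z1]; case=> s2 [/andP[p2 a2] l2 z2].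
exists (s1 ++ s2); split.
- rewrite /recol_walk cat_path p1 l1 p2 /=.
  move: a1 a2 => /= /andP[-> A1] /andP[_ A2] /=.
  by rewrite all_cat A1 A2.
- by rewrite last_cat l1.
- by rewrite size_cat leq_add.
Qed.

Lemma recol_adj_sym : symmetric (@recol_adj V l).
Proof.
move=> f g; rewrite /recol_adj; congr (_ == _); apply: eq_card => v.
by rewrite !inE eq_sym.
Qed.

Lemma reach_sym a b d : reach a b d -> reach b a d.
Proof.
case=> s [/andP[p al] ls sz].
exists (rev (belast a s)); split.
- rewrite /recol_walk -ls rev_path.
  apply/andP; split.
    by rewrite (@eq_path _ _ (@recol_adj V l)) // => x y; apply: recol_adj_sym.
  apply/allP => x; rewrite inE mem_rev => /orP[/eqP -> | /mem_belast xs].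
    by move/allP: al; apply; exact: mem_last.
  by move/allP: al; apply.
- case: s ls {p al sz} => [|y t] /= ls; first by [].
  by rewrite rev_cons last_rcons.
- by rewrite size_rev size_belast.
Qed.

Lemma reach1 (a b : {ffun V -> 'I_l}) v : proper_col e a -> proper_col e b ->
  (forall w, w != v -> a w = b w) -> reach a b 1.
Proof.
move=> pa pb H.
have [ab | nab] := eqVneq a b.
  by subst; apply: reach_le (reach0 pa).
exists [:: b]; split => //.
rewrite /recol_walk /= pa pb andbT /recol_adj.
have av : a v != b v.
  apply: contra nab => /eqP avb; apply/eqP/ffunP => w.
  by have [-> //|wv] := eqVneq w v; apply: H.
suff -> : [set w | a w != b w] = [set v] by rewrite cards1.
apply/setP => w; rewrite !inE; have [-> //|wv] := eqVneq w v.
by rewrite H ?eqxx.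
Qed.

Lemma move_lemma (a : {ffun V -> 'I_l}) (S : seq V) (t : V -> 'I_l) :
  uniq S -> proper_col e a ->
  (forall u v, u \in S -> v \in S -> ~~ e u v) ->
  (forall u v, u \in S -> e u v -> t u != a v) ->
  reach a [ffun w => if w \in S then t w else a w] (size S).
Proof.
elim: S a => [|x S IH] a /= uS pa Hind Ht.
  have -> : [ffun w => a w] = a by apply/ffunP => w; rewrite ffunE.
  exact: reach0.
move: uS => /andP[xS uS].
pose a1 := [ffun w => if w == x then t x else a w].
have pa1 : proper_col e a1.
  apply/propercP => u v euv; rewrite !ffunE.
  have [ux|ux] := eqVneq u x; have [vx|vx] := eqVneq v x.
  - by subst; rewrite eirr in euv.
  - by subst; apply: Ht; rewrite ?inE ?eqxx.
  - subst; rewrite eq_sym; apply: Ht; rewrite ?inE ?eqxx //; by rewrite esym.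
  - by move/propercP: pa; apply.
have r1 : reach a a1 1.
  by apply: (reach1 (v := x)) => // w wx; rewrite ffunE (negbTE wx).
have r2 := IH a1 uS pa1 _ _.
have -> : [ffun w => if w \in x :: S then t w else a w] =
          [ffun w => if w \in S then t w else a1 w].
  apply/ffunP => w; rewrite !ffunE inE.
  by have [->|wx] := eqVneq w x; rewrite ?(negbTE xS) //=.
rewrite -add1n; apply: reach_trans r1 (r2 _ _).
- by move=> u v uS' vS'; apply: Hind; rewrite inE ?uS' ?vS' orbT.
- move=> u v uS' euv; rewrite ffunE.
  have [vx|vx] := eqVneq v x.
    subst v; have := Hind u x; rewrite euv !inE uS' eqxx orbT.
    by move=> /(_ isT isT).
  by apply: Ht; rewrite // inE uS' orbT.
Qed.

End Reach.

Section Rename.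
Variables (V : finType) (e : rel V) (l : nat).
Hypothesis esym : symmetric e.
Hypothesis eirr : irreflexive e.
Variables (R : {set V}) (rho : V -> V).
Hypothesis rhoR : forall v, rho v \in R.
Hypothesis rho_id : forall r, r \in R -> rho r = r.
Hypothesis rho_ind : forall u v, rho u = rho v -> ~~ e u v.
Hypothesis Rl : #|R| < l.

Definition cc (c : V -> 'I_l) : {ffun V -> 'I_l} := [ffun v => c (rho v)].
Definition good (c : V -> 'I_l) := {in R &, injective c}.
Definition cls r := [set v | rho v == r].
Definition upd (c : V -> 'I_l) r b := fun w => if w == r then b else c w.

Lemma cc_proper c : good c -> proper_col e (cc c).
Proof.
move=> gc; apply/propercP => x y exy; rewrite !ffunE.
apply/negP => /eqP /gc; rewrite !rhoR => /(_ isT isT) H.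
by have := rho_ind H; rewrite exy.
Qed.

Lemma good_upd c r b : good c -> r \in R -> (forall r', r' \in R -> c r' != b) ->
  good (upd c r b).
Proof.
move=> gc rR Hb x y xR yR; rewrite /upd.
have [xr|xr] := eqVneq x r; have [yr|yr] := eqVneq y r.
- by rewrite xr yr.
- by move=> E; have := Hb y yR; rewrite -E eqxx.
- by move=> E; have := Hb x xR; rewrite E eqxx.
- exact: gc.
Qed.

Lemma move_class c r b : good c -> r \in R -> (forall r', r' \in R -> c r' != b) ->
  reach e (cc c) (cc (upd c r b)) #|cls r|.
Proof.
move=> gc rR Hb.
have := @move_lemma V e l esym eirr (cc c) (enum (cls r)) (fun _ => b) (enum_uniq _)
  (cc_proper gc).
rewrite -cardE.
have -> : [ffun w => if w \in enum (cls r) then b else cc c w] = cc (upd c r b).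
  apply/ffunP => w; rewrite !ffunE mem_enum inE /upd; by case: (rho w == r).
apply.
- move=> u v; rewrite !mem_enum !inE => /eqP ur /eqP vr; apply: rho_ind.
  by rewrite ur vr.
- by move=> u v _ _; rewrite ffunE eq_sym; apply: Hb.
Qed.

Section Target.
Variable d : V -> 'I_l.
Hypothesis gd : good d.

Definition wt (c : V -> 'I_l) r :=
  ((c r != d r) + ((c r != d r) && (c r \in d @: R))) * #|cls r|.
Definition W c := \sum_(r in R) wt c r.

Lemma W_upd c r b k : r \in R -> wt (upd c r b) r + k <= wt c r ->
  W (upd c r b) + k <= W c.
Proof.
move=> rR H; rewrite /W (bigD1 r rR) [X in _ <= X](bigD1 r rR) /=.
rewrite -addnA [_ + k]addnC addnA; apply: leq_add => //.
rewrite leq_eqVlt; apply/orP; left; apply/eqP; apply: eq_bigr => r' /andP[_ r'r].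
by rewrite /wt /upd (negbTE r'r).
Qed.

Lemma cls_gt0 r : r \in R -> 0 < #|cls r|.
Proof. by move=> rR; apply/card_gt0P; exists r; rewrite inE rho_id. Qed.

Lemma card_imR c : good c -> #|c @: R| = #|R|.
Proof. by move=> gc; rewrite card_in_imset. Qed.

Lemma rename_main c : good c -> reach e (cc c) (cc d) (W c).
Proof.
have [n] := ubnP (W c); elim: n c => // n IH c ltW gc.
case: (pickP [pred r | (r \in R) && (c r != d r) && (d r \notin c @: R)]) =>
    [r /andP[/andP[rR ne] free] | nofree].
  have Hb : forall r', r' \in R -> c r' != d r.
    move=> r' r'R; apply: contra free => /eqP <-; exact: imset_f.
  have le : W (upd c r (d r)) + #|cls r| <= W c.
    apply: W_upd => //; rewrite /wt /upd eqxx eqxx /= ne /= mul0n add0n.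
    by rewrite mulnDl mul1n leq_addr.
  have r1 := move_class gc rR Hb.
  have r2 := IH (upd c r (d r)) _ (good_upd gc rR Hb).
  apply: reach_le (reach_trans r1 (r2 _)).
    by rewrite addnC.
  have := cls_gt0 rR; move: le ltW; rewrite ltnS; move=> A B C.
  apply: leq_trans B; apply: leq_trans A; by rewrite -addn1 leq_add2l.
case: (pickP [pred r | (r \in R) && (c r != d r)]) => [r /andP[rR ne] | allm].
  have dsub : d @: R \subset c @: R.
    apply/subsetP => x /imsetP[r' r'R ->].
    have := nofree r'; rewrite /= r'R /=.
    have [E _|ne' /negbFE //] := eqVneq (c r') (d r'); rewrite -E; exact: imset_f.
  have deq : d @: R = c @: R.
    apply/eqP; rewrite eqEcard dsub /= !card_imR //.
  have [b Hb] : exists b, b \notin c @: R.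
    apply/existsP; rewrite -negb_forall; apply/negP => /forallP H.
    have : [set: 'I_l] \subset c @: R by apply/subsetP => x _; apply: H.
    move/subset_leq_card; rewrite cardsT card_ord card_imR // => H2.
    by have := leq_trans Rl H2; rewrite ltnn.
  have Hb' : forall r', r' \in R -> c r' != b.
    by move=> r' r'R; apply: contraNneq Hb => <-; exact: imset_f.
  have le : W (upd c r b) + #|cls r| <= W c.
    apply: W_upd => //; rewrite /wt /upd eqxx.
    have bd : b != d r by apply: contraNneq Hb => ->; rewrite -deq imset_f.
    have cd : c r \in d @: R by rewrite deq imset_f.
    by rewrite bd ne cd deq (negbTE Hb) /= addn0 add1n mul1n mulSn mul1n.
  have r1 := move_class gc rR Hb'.
  have r2 := IH (upd c r b) _ (good_upd gc rR Hb').
  apply: reach_le (reach_trans r1 (r2 _)).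
    by rewrite addnC.
  have := cls_gt0 rR; move: le ltW; rewrite ltnS; move=> A B C.
  apply: leq_trans B; apply: leq_trans A; by rewrite -addn1 leq_add2l.
have -> : cc c = cc d.
  apply/ffunP => v; rewrite !ffunE; have := allm (rho v); rewrite /= rhoR /=.
  by move=> /negbT /negPn /eqP.
by apply: reach_le (reach0 (cc_proper gd)).
Qed.

Lemma sum_cls : \sum_(r in R) #|cls r| = #|V|.
Proof.
symmetry; rewrite -sum1_card (partition_big rho (mem R)) //=.
apply: eq_bigr => r _; rewrite -sum1_card; apply: eq_bigl => v.
by rewrite inE.
Qed.

Lemma W_le c : W c <= 2 * #|V|.
Proof.
rewrite -sum_cls big_distrr /=; apply: leq_sum => r _.
rewrite /wt leq_mul2r; apply/orP; right.
by case: (c r != d r); case: (_ \in _).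
Qed.

End Target.

Lemma diam_from_canon :
  (forall a, proper_col e a -> exists c, good c /\ reach e a (cc c) #|V|) ->
  recol_diam_le e l (4 * #|V|).
Proof.
move=> H a b pa pb.
have [ca [gca ra]] := H a pa; have [cb [gcb rb]] := H b pb.
have rm := reach_le (W_le cb ca) (rename_main gcb gca).
have := reach_trans (reach_trans ra rm) (reach_sym rb).
have -> : #|V| + 2 * #|V| + #|V| = 4 * #|V| by rewrite !mulSn !mul0n !addn0 !addnA.
done.
Qed.

End Rename.

Section SplitCase.
Variables (V : finType) (e : rel V) (l : nat).
Hypothesis esym : symmetric e.
Hypothesis eirr : irreflexive e.
Variable K : {set V}.
Hypothesis Kcl : forall x y, x \in K -> y \in K -> x != y -> e x y.
Hypothesis Iind : forall x y, x \notin K -> y \notin K -> ~~ e x y.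
Hypothesis Inn : forall v, v \notin K -> exists2 k, k \in K & ~~ e v k.
Hypothesis Kl : #|K| < l.

Definition rhoS v := if v \in K then v else odflt v [pick k in K | ~~ e v k].

Lemma rhoS_out v : v \notin K -> rhoS v \in K /\ ~~ e v (rhoS v).
Proof.
move=> vK; rewrite /rhoS (negbTE vK).
case: pickP => [k /andP[kK nk] | H] //=.
by have [k kK nk] := Inn vK; have := H k; rewrite kK nk.
Qed.

Lemma inj_clique (a : {ffun V -> 'I_l}) : proper_col e a -> {in K &, injective a}.
Proof.
move=> pa x y xK yK axy; apply/eqP; apply/negP => /negP nxy.
by have := (propercP _ _ pa) x y (Kcl xK yK nxy); rewrite axy eqxx.
Qed.

Lemma split_diam : recol_diam_le e l (4 * #|V|).
Proof.
apply: (diam_from_canon esym eirr (R:=K) (rho:=rhoS)) => //.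
- by move=> v; case: (boolP (v \in K)) => vK; [rewrite /rhoS vK | case: (rhoS_out vK)].
- by move=> r rK; rewrite /rhoS rK.
- move=> u v; case: (boolP (u \in K)) => uK; case: (boolP (v \in K)) => vK.
  + by rewrite /rhoS uK vK => ->; rewrite eirr.
  + have [_ nv] := rhoS_out vK; rewrite {1}/rhoS uK => ->; by rewrite esym.
  + have [_ nu] := rhoS_out uK; rewrite {2}/rhoS vK => <-; done.
  + by move=> _; apply: Iind.
- move=> a pa; exists (fun v => a v); split; first exact: inj_clique.
  have := @move_lemma V e l esym eirr a (enum (~: K)) (fun v => a (rhoS v)) (enum_uniq _) pa.
  have -> : [ffun w => if w \in enum (~: K) then a (rhoS w) else a w] = cc rhoS (fun v => a v).
    apply/ffunP => w; rewrite !ffunE mem_enum inE.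
    by case: (boolP (w \in K)) => wK //=; rewrite /rhoS wK.
  move=> H; apply: (reach_le _ (H _ _)).
  + by rewrite -cardE max_card.
  + by move=> u v; rewrite !mem_enum !inE; apply: Iind.
  + move=> u v; rewrite mem_enum inE => uK euv.
    have [rK nr] := rhoS_out uK.
    case: (boolP (v \in K)) => vK; last by rewrite (negbTE (Iind uK vK)) in euv.
    apply/negP => /eqP /(inj_clique pa rK vK) E.
    by rewrite E euv in nr.
Qed.

End SplitCase.

Lemma cardU_le (T : finType) (A B : {set T}) : #|A :|: B| <= #|A| + #|B|.
Proof. by rewrite cardsU leq_subr. Qed.
Lemma card2_le (T : finType) (a b : T) : #|[set a; b]| <= 2.
Proof. by rewrite cards2; case: (a != b). Qed.
Lemma card3_le (T : finType) (a b c : T) : #|[set a; b; c]| <= 3.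
Proof.
have := cardU_le [set a; b] [set c]; rewrite cards1 addn1 => H.
apply: (leq_trans H); rewrite ltnS; exact: card2_le.
Qed.

Lemma pick_col l (X : {set 'I_l}) : #|X| < l -> exists x, x \notin X.
Proof.
move=> Xl; apply/existsP; rewrite -negb_forall; apply/negP => /forallP H.
have : [set: 'I_l] \subset X by apply/subsetP => x _; apply: H.
move/subset_leq_card; rewrite cardsT card_ord => H2.
by have := leq_trans Xl H2; rewrite ltnn.
Qed.

Definition c5rel (i j : 'I_5) : bool := ((i + 1) %% 5 == j) || ((j + 1) %% 5 == i).
Definition o0 : 'I_5 := @Ordinal 5 0 isT.
Definition o1 : 'I_5 := @Ordinal 5 1 isT.
Definition o2 : 'I_5 := @Ordinal 5 2 isT.
Definition o3 : 'I_5 := @Ordinal 5 3 isT.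
Definition o4 : 'I_5 := @Ordinal 5 4 isT.
Definition rr (i : 'I_5) : 'I_5 := if val i == 2 then o0 else if val i == 3 then o1 else i.

Lemma ord5_cases (i : 'I_5) : i = o0 \/ i = o1 \/ i = o2 \/ i = o3 \/ i = o4.
Proof.
case: i => [[|[|[|[|[|m]]]]] Hm].
- by left; apply: val_inj.
- by right; left; apply: val_inj.
- by right; right; left; apply: val_inj.
- by right; right; right; left; apply: val_inj.
- by right; right; right; right; apply: val_inj.
- by move: Hm.
Qed.

Ltac o5 i := case: (ord5_cases i) => [->|[->|[->|[->|->]]]].

Lemma rr_in i : [|| rr i == o0, rr i == o1 | rr i == o4].
Proof. by o5 i. Qed.

Lemma rr_ind i j : rr i = rr j -> ~~ c5rel i j.
Proof. by move=> /(congr1 val); o5 i; o5 j. Qed.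

Section C5Case.
Variables (V : finType) (e : rel V) (l : nat).
Hypothesis esym : symmetric e.
Hypothesis eirr : irreflexive e.
Variables (K : {set V}) (f : 'I_5 -> V).
Hypothesis finj : injective f.
Hypothesis fe : forall i j, e (f i) (f j) = c5rel i j.
Hypothesis Kcl : forall x y, x \in K -> y \in K -> x != y -> e x y.
Hypothesis KC : forall k i, k \in K -> e k (f i).
Definition inI (v : V) := (v \notin K) && (v \notin codom f).
Hypothesis IC : forall u i, inI u -> ~~ e u (f i).
Hypothesis Iind : forall u v, inI u -> inI v -> ~~ e u v.
Hypothesis Kl : #|K| + 3 < l.

Lemma fK i : f i \notin K.
Proof. by apply/negP => H; have := KC i H; rewrite eirr. Qed.

Lemma classify v : [\/ v \in K, exists i, v = f i | inI v].
Proof.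
case vK: (v \in K); first by constructor 1.
case: (boolP (v \in codom f)) => [/codomP [i ->] | nv].
  by constructor 2; exists i.
by constructor 3; rewrite /inI vK nv.
Qed.

Definition rhoC v :=
  if v \in K then v else
  if [pick i | f i == v] is Some i then f (rr i)
  else odflt (f o0) [pick k in K | ~~ e v k].

Lemma rho_K v : v \in K -> rhoC v = v.
Proof. by rewrite /rhoC => ->. Qed.

Lemma rho_f i : rhoC (f i) = f (rr i).
Proof.
rewrite /rhoC (negbTE (fK i)); case: pickP => [j /eqP /finj -> // | H].
by have := H i; rewrite eqxx.
Qed.

Lemma rho_I v : inI v ->
  (rhoC v \in K /\ ~~ e v (rhoC v)) \/ (rhoC v = f o0 /\ forall k, k \in K -> e v k).
Proof.
move=> /andP[vK vf]; rewrite /rhoC (negbTE vK).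
case: pickP => [i /eqP fi | _]; first by rewrite -fi codom_f in vf.
case: pickP => [k /andP[kK nk] | H]; first by left.
right; split => // k kK; have := H k; rewrite /= kK /=.
by move/negbT; rewrite negbK.
Qed.

Definition RC := K :|: [set f o0; f o1; f o4].

Lemma inj_K (a : {ffun V -> 'I_l}) : proper_col e a -> {in K &, injective a}.
Proof.
move=> pa x y xK yK axy; apply/eqP; apply/negP => /negP nxy.
by have := (propercP _ _ pa) x y (Kcl xK yK nxy); rewrite axy eqxx.
Qed.

Lemma rho_ind1 u v : rhoC u = rhoC v -> u \in K -> ~~ e u v.
Proof.
move=> E uK; rewrite (rho_K uK) in E.
case: (classify v) => [vK | [j vj] | vI].
- by rewrite (rho_K vK) in E; rewrite E eirr.
- by rewrite vj rho_f in E; have := fK (rr j); rewrite -E uK.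
- case: (rho_I vI) => [[_ nv] | [E2 _]].
    by rewrite esym E.
  by have := fK o0; rewrite -E2 -E uK.
Qed.

Lemma rhoC_ind u v : rhoC u = rhoC v -> ~~ e u v.
Proof.
move=> E.
case: (boolP (u \in K)) => uK; first exact: rho_ind1.
case: (boolP (v \in K)) => vK; first by rewrite esym; apply: rho_ind1.
case: (classify u) => [uK' | [i ui] | uI]; first by rewrite uK' in uK.
- case: (classify v) => [vK' | [j vj] | vI]; first by rewrite vK' in vK.
  + by rewrite ui vj !rho_f in E *; rewrite fe; apply: rr_ind; apply: finj.
  + by rewrite ui esym; apply: IC.
- case: (classify v) => [vK' | [j vj] | vI]; first by rewrite vK' in vK.
  + by rewrite vj; apply: IC.
  + exact: Iind.
Qed.

Lemma rhoC_R v : rhoC v \in RC.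
Proof.
rewrite /RC !inE.
case: (classify v) => [vK | [i ->] | vI].
- by rewrite rho_K // vK.
- rewrite rho_f !(inj_eq finj); by case/or3P: (rr_in i) => ->; rewrite ?orbT.
- by case: (rho_I vI) => [[-> _] | [-> _]]; rewrite ?eqxx ?orbT.
Qed.

Lemma rhoC_id r : r \in RC -> rhoC r = r.
Proof.
rewrite /RC !inE => /orP[rK | ]; first exact: rho_K.
by move=> /orP[/orP[]|] /eqP ->; rewrite rho_f.
Qed.

Lemma RC_card : #|RC| < l.
Proof.
apply: leq_ltn_trans Kl; apply: (leq_trans (cardU_le _ _)).
by rewrite leq_add2l card3_le.
Qed.


Lemma notf k i : k \in K -> (k == f i) = false.
Proof. by move=> kK; apply/negbTE; apply: contraNneq (fK i) => <-. Qed.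

Lemma RC_cases r : r \in RC -> r \in K \/ r = f o0 \/ r = f o1 \/ r = f o4.
Proof.
rewrite /RC !inE => /orP[rK | ]; first by left.
by move=> /orP[/orP[]|] /eqP ->; [right; left | right; right; left | right; right; right].
Qed.

Lemma c5_canon (a : {ffun V -> 'I_l}) : proper_col e a ->
  exists c, good RC c /\ reach e a (cc rhoC c) #|V|.
Proof.
move=> pa; have ia := inj_K pa.
have Xl : #|a @: K :|: [set a (f o1); a (f o3); a (f o4)]| < l.
  apply: leq_ltn_trans Kl; apply: (leq_trans (cardU_le _ _)).
  by apply: leq_add; [exact: leq_imset_card | exact: card3_le].
have [x Hx] := pick_col Xl.
have Yl : #|a @: K :|: [set x; a (f o4)]| < l.
  apply: leq_ltn_trans Kl; apply: (leq_trans (cardU_le _ _)).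
  by apply: leq_add; [exact: leq_imset_card | exact: leq_trans (card2_le _ _) _].
have [y Hy] := pick_col Yl.
have xK : x \notin a @: K by apply: contra Hx => H; rewrite !inE H.
have x1 : x != a (f o1) by apply: contra Hx => H; rewrite !inE H ?orbT.
have x3 : x != a (f o3) by apply: contra Hx => H; rewrite !inE H ?orbT.
have x4 : x != a (f o4) by apply: contra Hx => H; rewrite !inE H ?orbT.
have yK : y \notin a @: K by apply: contra Hy => H; rewrite !inE H.
have yx : y != x by apply: contra Hy => H; rewrite !inE H ?orbT.
have y4 : y != a (f o4) by apply: contra Hy => H; rewrite !inE H ?orbT.
have a4K : a (f o4) \notin a @: K.
  apply/imsetP => -[k kK E].
  by have := (propercP _ _ pa) k (f o4) (KC o4 kK); rewrite E eqxx.
pose c := fun v => if v == f o0 then x else if v == f o1 then y else a v.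
have cK k : k \in K -> c k = a k by move=> kK; rewrite /c !notf.
have c0 : c (f o0) = x by rewrite /c eqxx.
have c1 : c (f o1) = y by rewrite /c !(inj_eq finj).
have c4 : c (f o4) = a (f o4) by rewrite /c !(inj_eq finj).
exists c; split.
  move=> u v uR vR.
  case: (RC_cases uR) => [uK|[->|[->|->]]]; case: (RC_cases vR) => [vK|[->|[->|->]]];
    rewrite ?c0 ?c1 ?c4 ?cK //.
  - exact: ia.
  - by move=> E; rewrite -E imset_f in xK.
  - by move=> E; rewrite -E imset_f in yK.
  - by move=> E; rewrite -E imset_f in a4K.
  - by move=> E; rewrite E imset_f in xK.
  - by move=> E; rewrite E eqxx in yx.
  - by move=> E; rewrite E eqxx in x4.
  - by move=> E; rewrite E imset_f in yK.
  - by move=> E; rewrite E eqxx in yx.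
  - by move=> E; rewrite E eqxx in y4.
  - by move=> E; rewrite E imset_f in a4K.
  - by move=> E; rewrite E eqxx in x4.
  - by move=> E; rewrite E eqxx in y4.
pose a1 := [ffun w => if w \in [:: f o0; f o2] then x else a w].
have r1 : reach e a a1 2.
  apply: (move_lemma esym eirr) => //.
  - by rewrite /= inE (inj_eq finj).
  - by move=> u v; rewrite !inE ?orbF => /orP[]/eqP-> /orP[]/eqP->; rewrite fe.
  - move=> u v; rewrite !inE ?orbF => /orP[]/eqP-> euv;
    (case: (classify v) => [vK | [j vj] | vI];
      [ by apply: contraNneq xK => ->; exact: imset_f
      | move: euv; rewrite vj fe; o5 j; by move=> //= _
      | by rewrite esym (negbTE (IC _ vI)) in euv ]).
have pa1 := reach_proper r1.
pose a2 := [ffun w => if w \in [:: f o1; f o3] then y else a1 w].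
have r2 : reach e a1 a2 2.
  apply: (move_lemma esym eirr) => //.
  - by rewrite /= inE (inj_eq finj).
  - by move=> u v; rewrite !inE ?orbF => /orP[]/eqP-> /orP[]/eqP->; rewrite fe.
  - move=> u v; rewrite !inE ?orbF => /orP[]/eqP-> euv;
    (case: (classify v) => [vK | [j vj] | vI];
      [ by rewrite /a1 ffunE !inE !notf //; apply: contraNneq yK => ->; exact: imset_f
      | move: euv; rewrite vj fe /a1 ffunE !inE !(inj_eq finj); o5 j; by move=> //= _
      | by rewrite esym (negbTE (IC _ vI)) in euv ]).
have pa2 := reach_proper r2.
pose S := enum [set v | inI v].
have r3 : reach e a2 [ffun w => if w \in S then c (rhoC w) else a2 w] (size S).
  apply: (move_lemma esym eirr) => //.
  - exact: enum_uniq.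
  - by move=> u v; rewrite !mem_enum !inE; apply: Iind.
  - move=> u v; rewrite mem_enum inE => uI euv.
    case: (classify v) => [vK | [j vj] | vI]; last first.
    + by rewrite (negbTE (Iind uI vI)) in euv.
    + by rewrite vj (negbTE (IC _ uI)) in euv.
    rewrite /a2 /a1 !ffunE !inE !notf //=.
    case: (rho_I uI) => [[rK nr] | [-> _]].
    + rewrite cK //; apply/negP => /eqP /(ia _ _ rK vK) E.
      by rewrite E euv in nr.
    + by rewrite c0; apply: contraNneq xK => ->; exact: imset_f.
have -> : cc rhoC c = [ffun w => if w \in S then c (rhoC w) else a2 w].
  apply/ffunP => w; rewrite !ffunE mem_enum inE.
  case: (classify w) => [wK | [i ->] | wI].
  - by rewrite /inI wK /= !inE !notf //= rho_K // cK.
  - rewrite /inI codom_f andbF /= !inE !(inj_eq finj) rho_f.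
    by o5 i; rewrite /rr /= ?c0 ?c1 ?c4.
  - by rewrite wI.
apply: reach_le (reach_trans (reach_trans r1 r2) r3).
rewrite /S -cardE.
have : [set v | inI v] \subset ~: (f @: setT).
  apply/subsetP => v; rewrite !inE => /andP[_ vf]; apply/imsetP => -[i _ E].
  by rewrite E codom_f in vf.
move/subset_leq_card; rewrite -(cardsC (f @: setT)) card_in_imset ?cardsT ?card_ord.
  by move=> H; lia.
by move=> p q _ _; apply: finj.
Qed.

Lemma c5_diam : recol_diam_le e l (4 * #|V|).
Proof.
exact: (diam_from_canon esym eirr rhoC_R rhoC_id rhoC_ind RC_card c5_canon).
Qed.

End C5Case.

Definition p0 : 'I_4 := @Ordinal 4 0 isT.
Definition p1 : 'I_4 := @Ordinal 4 1 isT.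
Definition p2 : 'I_4 := @Ordinal 4 2 isT.
Definition p3 : 'I_4 := @Ordinal 4 3 isT.

Lemma ord4_cases (i : 'I_4) : i = p0 \/ i = p1 \/ i = p2 \/ i = p3.
Proof.
case: i => [[|[|[|[|m]]]] Hm].
- by left; apply: val_inj.
- by right; left; apply: val_inj.
- by right; right; left; apply: val_inj.
- by right; right; right; apply: val_inj.
- by move: Hm.
Qed.

Ltac o4 i := case: (ord4_cases i) => [->|[->|[->|->]]].

Definition hasC5 (V : finType) (e : rel V) :=
  exists f : 'I_5 -> V, injective f /\ forall i j, e (f i) (f j) = c5rel i j.

Section Induced.
Variables (V : finType) (e : rel V).
Hypothesis esym : symmetric e.
Hypothesis eirr : irreflexive e.

Lemma nth_inj n (s : seq V) x0 : uniq s -> size s = n ->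
  injective (fun i : 'I_n => nth x0 s i).
Proof.
move=> us sz i j /eqP; rewrite nth_uniq ?sz // => /eqP; exact: val_inj.
Qed.

Lemma mk2K2 a b c d : uniq [:: a; b; c; d] -> e a b -> e c d ->
  ~~ e a c -> ~~ e a d -> ~~ e b c -> ~~ e b d -> has_induced two_K2 e.
Proof.
move=> us ab cd ac ad bc bd.
exists (fun i : 'I_4 => nth a [:: a; b; c; d] i); split; first exact: nth_inj.
move=> x y.
o4 x; o4 y; rewrite /= ?eirr ?(negbTE ac) ?(negbTE ad) ?(negbTE bc) ?(negbTE bd) ?ab ?cd //.
all: rewrite esym ?(negbTE ac) ?(negbTE ad) ?(negbTE bc) ?(negbTE bd) ?ab ?cd //.
Qed.

Lemma mkC4 a b c d : uniq [:: a; b; c; d] -> e a b -> e b c -> e c d -> e d a ->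
  ~~ e a c -> ~~ e b d -> has_induced C4 e.
Proof.
move=> us ab bc cd da ac bd.
exists (fun i : 'I_4 => nth a [:: a; b; c; d] i); split; first exact: nth_inj.
move=> x y.
o4 x; o4 y; rewrite /= ?eirr ?(negbTE ac) ?(negbTE bd) ?ab ?bc ?cd ?da //.
all: rewrite esym ?(negbTE ac) ?(negbTE bd) ?ab ?bc ?cd ?da //.
Qed.

Lemma mkC5 a b c d g : uniq [:: a; b; c; d; g] ->
  e a b -> e b c -> e c d -> e d g -> e g a ->
  ~~ e a c -> ~~ e a d -> ~~ e b d -> ~~ e b g -> ~~ e c g -> hasC5 e.
Proof.
move=> us ab bc cd dg ga ac ad bd bg cg.
exists (fun i : 'I_5 => nth a [:: a; b; c; d; g] i); split; first exact: nth_inj.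
move=> x y.
o5 x; o5 y; rewrite /= ?eirr ?(negbTE ac) ?(negbTE ad) ?(negbTE bd) ?(negbTE bg) ?(negbTE cg)
  ?ab ?bc ?cd ?dg ?ga //.
all: rewrite esym ?(negbTE ac) ?(negbTE ad) ?(negbTE bd) ?(negbTE bg) ?(negbTE cg)
  ?ab ?bc ?cd ?dg ?ga //.
Qed.

End Induced.

Definition add5 (i k : 'I_5) : 'I_5 := @Ordinal 5 ((i + k) %% 5) (@ltn_pmod (i + k) 5 isT).

Lemma c5rel_rot i j k : c5rel (add5 i j) (add5 i k) = c5rel j k.
Proof. by o5 i; o5 j; o5 k. Qed.

Lemma add5_inj i : injective (add5 i).
Proof. by move=> j k /(congr1 val); o5 i; o5 j; o5 k. Qed.

Lemma add5_0 i : add5 i o0 = i.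
Proof. by apply: val_inj; rewrite /= addn0 modn_small. Qed.

Section C5Struct.
Variables (V : finType) (e : rel V).
Hypothesis esym : symmetric e.
Hypothesis eirr : irreflexive e.
Hypothesis no2K2 : ~ has_induced two_K2 e.
Hypothesis noC4 : ~ has_induced C4 e.

Lemma key0 (g : 'I_5 -> V) u : injective g -> (forall i j, e (g i) (g j) = c5rel i j) ->
  (forall k, u != g k) -> e u (g o0) -> ~~ e u (g o1) -> False.
Proof.
move=> ginj ge ug H0 H1.
have ug' k : (u == g k) = false by apply/negbTE.
have gu k : (g k == u) = false by rewrite eq_sym ug'.
have H1' := negbTE H1.
case E2: (e u (g o2)); case E3: (e u (g o3)); case E4: (e u (g o4)).
all: first
  [ (have _ : true = e u (g o2) by rewrite E2);
    apply: noC4; apply: (mkC4 esym eirr (a:=u) (b:=g o0) (c:=g o1) (d:=g o2))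
  | (have _ : (true, false) = (e u (g o3), e u (g o4)) by rewrite E3 E4);
    apply: noC4; apply: (mkC4 esym eirr (a:=u) (b:=g o3) (c:=g o4) (d:=g o0))
  | (have _ : (true, true) = (e u (g o3), e u (g o4)) by rewrite E3 E4);
    apply: no2K2; apply: (mk2K2 esym eirr (a:=u) (b:=g o4) (c:=g o1) (d:=g o2))
  | (have _ : false = e u (g o3) by rewrite E3);
    apply: no2K2; apply: (mk2K2 esym eirr (a:=u) (b:=g o0) (c:=g o2) (d:=g o3)) ].
all: try solve [ rewrite /= !inE !(inj_eq ginj) ?ug' ?gu //
               | rewrite ?ge //
               | rewrite ?E2 ?E3 ?E4 ?H0 ?H1' //
               | rewrite esym ?E2 ?E3 ?E4 ?H0 ?H1' // ].
Qed.

Variables (f : 'I_5 -> V).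
Hypothesis finj : injective f.
Hypothesis fe : forall i j, e (f i) (f j) = c5rel i j.

Lemma key_at u i j : u \notin codom f -> add5 i o1 = j -> e u (f i) -> ~~ e u (f j) -> False.
Proof.
move=> uf Ej Hi Hj.
apply: (@key0 (fun k => f (add5 i k)) u).
- by move=> a b /finj /add5_inj.
- by move=> a b; rewrite fe c5rel_rot.
- by move=> k; apply: contraNneq uf => ->; exact: codom_f.
- by rewrite add5_0.
- by rewrite Ej.
Qed.

Lemma allnone u : u \notin codom f -> (forall i, e u (f i)) \/ (forall i, ~~ e u (f i)).
Proof.
move=> uf.
case E0: (e u (f o0)); case E1: (e u (f o1)); case E2: (e u (f o2));
  case E3: (e u (f o3)); case E4: (e u (f o4)).
all: first
  [ by left; move=> i; o5 i; rewrite ?E0 ?E1 ?E2 ?E3 ?E4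
  | by right; move=> i; o5 i; rewrite ?E0 ?E1 ?E2 ?E3 ?E4
  | exfalso; first
    [ by apply: (key_at (i:=o0) (j:=o1) uf); [apply: val_inj | rewrite E0 | rewrite E1]
    | by apply: (key_at (i:=o1) (j:=o2) uf); [apply: val_inj | rewrite E1 | rewrite E2]
    | by apply: (key_at (i:=o2) (j:=o3) uf); [apply: val_inj | rewrite E2 | rewrite E3]
    | by apply: (key_at (i:=o3) (j:=o4) uf); [apply: val_inj | rewrite E3 | rewrite E4]
    | by apply: (key_at (i:=o4) (j:=o0) uf); [apply: val_inj | rewrite E4 | rewrite E0] ] ].
Qed.

Lemma c5_struct : exists K : {set V},
  [/\ forall x y, x \in K -> y \in K -> x != y -> e x y,
      forall k i, k \in K -> e k (f i),
      forall u i, (u \notin K) && (u \notin codom f) -> ~~ e u (f i) &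
      forall u v, (u \notin K) && (u \notin codom f) -> (v \notin K) && (v \notin codom f) ->
        ~~ e u v].
Proof.
pose K := [set v | [forall i, e v (f i)]].
have KP k i : k \in K -> e k (f i) by rewrite inE => /forallP.
have Kf k : k \in K -> k \notin codom f.
  move=> kK; apply/negP => /codomP [i ki]; have := KP k i kK; by rewrite ki eirr.
have IC u i : (u \notin K) && (u \notin codom f) -> ~~ e u (f i).
  move=> /andP[uK uf]; case: (allnone uf) => [H | H] //.
  by move: uK; rewrite inE; move/forallP.
exists K; split => //.
- move=> x y xK yK xy; apply/negPn/negP => nxy; apply: noC4.
  have nf v k : v \in K -> (v == f k) = false.
    by move=> vK; apply/negbTE; apply: contraNneq (Kf v vK) => ->; exact: codom_f.
  apply: (mkC4 esym eirr (a:=x) (b:=f o0) (c:=y) (d:=f o2)).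
  all: try solve [ exact: KP | by rewrite esym; apply: KP | by rewrite fe | done ].
  by rewrite /= !inE !(inj_eq finj) /= (negbTE xy) /= !nf // ![f _ == _]eq_sym !nf.
- move=> u v uI vI; apply/negP => euv; apply: no2K2.
  apply: (mk2K2 esym eirr (a:=u) (b:=v) (c:=f o0) (d:=f o1)).
  all: try solve [ exact: IC | by rewrite fe | done ].
  move: uI vI => /andP[_ uf] /andP[_ vf].
  have nf w k : w \notin codom f -> (w == f k) = false.
    by move=> wf; apply/negbTE; apply: contraNneq wf => ->; exact: codom_f.
  have uv : (u == v) = false.
    by apply/negbTE/negP => /eqP uv; rewrite uv eirr in euv.
  by rewrite /= !inE !(inj_eq finj) /= !nf // uv.
Qed.

End C5Struct.

Section SplitStruct.
Variables (V : finType) (e : rel V).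
Hypothesis esym : symmetric e.
Hypothesis eirr : irreflexive e.
Hypothesis no2K2 : ~ has_induced two_K2 e.
Hypothesis noC4 : ~ has_induced C4 e.
Hypothesis noC5 : ~ hasC5 e.

Definition cliq (K : {set V}) := [forall x in K, forall y in K, (x != y) ==> e x y].

Lemma cliqP (K : {set V}) : reflect (forall x y, x \in K -> y \in K -> x != y -> e x y) (cliq K).
Proof.
apply: (iffP forallP) => [H x y xK yK xy | H x].
  by have /implyP/(_ xK)/forallP/(_ y)/implyP/(_ yK)/implyP := H x; apply.
apply/implyP => xK; apply/forallP => y; apply/implyP => yK; apply/implyP; exact: H.
Qed.

Section WithK.
Variable K : {set V}.
Hypothesis Kcl : forall x y, x \in K -> y \in K -> x != y -> e x y.
Hypothesis Kmax : forall Q, cliq Q -> #|Q| <= #|K|.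

Lemma nn v : v \notin K -> exists2 k, k \in K & ~~ e v k.
Proof.
move=> vK; case: (pickP [pred k in K | ~~ e v k]) => [k /andP[kK nk] | H].
  by exists k.
exfalso.
have cl : cliq (v |: K).
  apply/cliqP => x y; rewrite !inE => /orP[/eqP -> | xK] /orP[/eqP -> | yK] xy.
  - by rewrite eqxx in xy.
  - by have := H y; rewrite /= yK /= => /negbT; rewrite negbK.
  - by have := H x; rewrite /= xK /= esym => /negbT; rewrite negbK.
  - exact: Kcl.
by have := Kmax cl; rewrite cardsU1 vK add1n ltnn.
Qed.

Lemma helper u v : u \notin K -> v \notin K -> e u v ->
  [set k in K | ~~ e u k] \subset [set k in K | ~~ e v k] ->
  exists k k2, [/\ k \in K, k2 \in K, k != k2, ~~ e u k &
                 [/\ ~~ e v k, ~~ e v k2 & forall x, x \in K -> x != k -> e u x]].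
Proof.
move=> uK vK euv sub.
have uv : u != v by apply: contraTneq euv => ->; rewrite eirr.
have [k kK nk] := nn uK.
have kv : ~~ e v k.
  by have := subsetP sub k; rewrite !inE kK nk /= => /(_ isT).
have allu : forall x, x \in K -> x != k -> e u x.
  move=> x xK xk; apply/negPn/negP => nx; apply: no2K2.
  have nvx : ~~ e v x by have := subsetP sub x; rewrite !inE xK nx /= => /(_ isT).
  have ukf w : w \in K -> (u == w) = false by move=> wK; apply: contraNF uK => /eqP ->.
  have vkf w : w \in K -> (v == w) = false by move=> wK; apply: contraNF vK => /eqP ->.
  apply: (mk2K2 esym eirr (a:=u) (b:=v) (c:=k) (d:=x)) => //.
  + by rewrite /= !inE (negbTE uv) !ukf // !vkf // eq_sym xk.
  + by apply: Kcl; rewrite // eq_sym.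
case: (pickP [pred k2 in K | (k2 != k) && ~~ e v k2]) => [k2 /and3P[k2K k2k nk2] | H].
  by exists k, k2; split => //; rewrite eq_sym.
exfalso.
have allv : forall x, x \in K -> x != k -> e v x.
  by move=> x xK xk; have := H x; rewrite /= xK xk /= => /negbT; rewrite negbK.
pose Q := u |: (v |: (K :\ k)).
have cl : cliq Q.
  apply/cliqP => x y; rewrite !inE.
  move=> /orP[/eqP -> | /orP[/eqP -> | /andP[xk xK]]] /orP[/eqP -> | /orP[/eqP -> | /andP[yk yK]]] xy.
  all: try by rewrite eqxx in xy.
  - done.
  - exact: allu.
  - by rewrite esym.
  - exact: allv.
  - by rewrite esym; apply: allu.
  - by rewrite esym; apply: allv.
  - exact: Kcl.
have := Kmax cl; rewrite /Q !cardsU1 (cardsD1 k K) kK !inE (negbTE uv) (negbTE uK) (negbTE vK).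
by rewrite !andbF /=; lia.
Qed.

Lemma fact1 u v : u \notin K -> v \notin K -> e u v ->
  exists u' v' k k2, [/\ u' \notin K, v' \notin K, e u' v', k \in K & k2 \in K] /\
    [/\ k != k2, ~~ e u' k, ~~ e v' k, ~~ e v' k2 & forall x, x \in K -> x != k -> e u' x].
Proof.
move=> uK vK euv.
case: (boolP ([set k in K | ~~ e u k] \subset [set k in K | ~~ e v k])) => [s1 | /subsetPn [k1]].
  have [k [k2 [? ? ? ? [? ? ?]]]] := helper uK vK euv s1.
  by exists u, v, k, k2.
rewrite !inE => /andP[k1K nk1] /nandP[|]; first by rewrite k1K.
move/negPn => vk1.
case: (boolP ([set k in K | ~~ e v k] \subset [set k in K | ~~ e u k])) => [s2 | /subsetPn [k2]].
  have evu : e v u by rewrite esym.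
  have [k [k2 [? ? ? ? [? ? ?]]]] := helper vK uK evu s2.
  by exists v, u, k, k2.
rewrite !inE => /andP[k2K nk2] /nandP[|]; first by rewrite k2K.
move/negPn => uk2.
exfalso; apply: noC4.
have uv : u != v by apply: contraTneq euv => ->; rewrite eirr.
have k12 : k1 != k2 by apply: contraNneq nk2 => <-.
have ukf w : w \in K -> (u == w) = false by move=> wK; apply: contraNF uK => /eqP ->.
have vkf w : w \in K -> (v == w) = false by move=> wK; apply: contraNF vK => /eqP ->.
apply: (mkC4 esym eirr (a:=u) (b:=k2) (c:=k1) (d:=v)) => //.
- have kvf w : w \in K -> (w == v) = false by move=> wK; rewrite eq_sym vkf.
  by rewrite /= !inE (ukf k2) // (ukf k1) // (negbTE uv) eq_sym (negbTE k12) !kvf.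
- by apply: Kcl; rewrite // eq_sym.
- by rewrite esym.
- by rewrite esym.
- by rewrite esym.
Qed.

End WithK.

Definition ES (R : {set V}) := [set p : V * V | [&& p.1 \in R, p.2 \in R & e p.1 p.2]].

Lemma uniq4 (a b c d : V) : a != b -> a != c -> a != d -> b != c -> b != d -> c != d ->
  uniq [:: a; b; c; d].
Proof.
move=> ab ac ad bc bd cd.
by rewrite /= !inE (negbTE ab) (negbTE ac) (negbTE ad) (negbTE bc) (negbTE bd) (negbTE cd).
Qed.

Lemma uniq5 (a b c d g : V) : a != b -> a != c -> a != d -> a != g -> b != c -> b != d ->
  b != g -> c != d -> c != g -> d != g -> uniq [:: a; b; c; d; g].
Proof.
move=> ab ac ad ag bc bd bg cd cg dg.
by rewrite /= !inE (negbTE ab) (negbTE ac) (negbTE ad) (negbTE ag) (negbTE bc) (negbTE bd)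
  (negbTE bg) (negbTE cd) (negbTE cg) (negbTE dg).
Qed.

Lemma nK (K : {set V}) x y : x \notin K -> y \in K -> x != y.
Proof. by move=> xK yK; apply: contraNneq xK => ->. Qed.

Lemma ne_e x y : e x y -> x != y.
Proof. by move=> exy; apply: contraTneq exy => ->; rewrite eirr. Qed.

Lemma split_struct : exists K : {set V},
  [/\ forall x y, x \in K -> y \in K -> x != y -> e x y,
      forall x y, x \notin K -> y \notin K -> ~~ e x y &
      forall v, v \notin K -> exists2 k, k \in K & ~~ e v k].
Proof.
have c0 : cliq set0 by apply/cliqP => x y; rewrite inE.
pose K0 := [arg max_(K > set0 | cliq K) #|K|].
have [K0cl K0max] : cliq K0 /\ forall Q, cliq Q -> #|Q| <= #|K0|.
  by rewrite /K0; case: arg_maxnP => // K Kc H; split => // Q /H.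
pose P K := cliq K && (#|K| == #|K0|).
have PK0 : P K0 by rewrite /P K0cl eqxx.
case: (@arg_minnP _ K0 P (fun K => #|ES (~: K)|) PK0) => K /andP[Kc /eqP Kcard] Kmin.
have Kcl := elimT (cliqP K) Kc.
have Kmax Q : cliq Q -> #|Q| <= #|K| by rewrite Kcard; apply: K0max.
exists K; split => //; last by move=> v; apply: nn.
move=> u0 v0 u0K v0K; apply/negP => euv0.
have [u [v [k [k2 [[uK vK euv kK k2K] [kk2 nuk nvk nvk2 allu]]]]]] :=
  fact1 Kcl Kmax u0K v0K euv0.
have uv := ne_e euv.
have N w : w \notin K -> e k w -> e u w.
  move=> wK ekw; apply/negPn/negP => nuw.
  have uw : u != w by apply: contraNneq nuk => ->; rewrite esym.
  have vw : v != w by apply: contraNneq nvk => ->; rewrite esym.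
  have euk2 : e u k2 by apply: allu; rewrite // eq_sym.
  case: (boolP (e v w)) => vw'.
  - case: (boolP (e w k2)) => wk2.
    + apply: noC4; apply: (mkC4 esym eirr (a:=u) (b:=v) (c:=w) (d:=k2)) => //.
      * by apply: uniq4 => //; apply: (nK (K:=K)).
      * by rewrite esym.
    + apply: noC5; apply: (mkC5 esym eirr (a:=u) (b:=v) (c:=w) (d:=k) (g:=k2)) => //.
      * by apply: uniq5 => //; apply: (nK (K:=K)).
      * by rewrite esym.
      * by apply: Kcl.
      * by rewrite esym.
  - apply: no2K2; apply: (mk2K2 esym eirr (a:=u) (b:=v) (c:=k) (d:=w)) => //.
    * apply: uniq4 => //; try (by apply: (nK (K:=K))).
      by rewrite eq_sym; apply: (nK (K:=K)).
pose K' := u |: (K :\ k).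
have K'c : cliq K'.
  apply/cliqP => x y; rewrite !inE.
  move=> /orP[/eqP -> | /andP[xk xK]] /orP[/eqP -> | /andP[yk yK]] xy.
  - by rewrite eqxx in xy.
  - exact: allu.
  - by rewrite esym; apply: allu.
  - exact: Kcl.
have K'card : #|K'| = #|K|.
  have uKk : u \notin K :\ k by rewrite !inE (negbTE uK) andbF.
  by rewrite /K' cardsU1 uKk [in RHS](cardsD1 k K) kK.
have := Kmin K'; rewrite /P K'c K'card Kcard eqxx => /(_ isT).
apply/negP; rewrite -ltnNge.
pose sw x := if x == k then u else x.
pose phi (p : V * V) := (sw p.1, sw p.2).
have inK' x : (x \in ~: K') = (x != u) && ((x == k) || (x \notin K)).
  rewrite !inE negb_or negb_and negbK.
  by case: (x == k); rewrite ?orbT ?andbT.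
have swK x : x \in ~: K' -> sw x \in ~: K.
  rewrite inK' /sw => /andP[xu /orP[/eqP xk | xK]]; first by rewrite xk eqxx inE.
  by case: (x == k); rewrite inE.
have swinj : {in ~: K' &, injective sw}.
  move=> x y; rewrite !inK' /sw => /andP[xu _] /andP[yu _].
  case: (x == k) / eqP => [->|xk]; case: (y == k) / eqP => [->|yk] //.
  - by move=> E; rewrite E eqxx in yu.
  - by move=> E; rewrite E eqxx in xu.
have inES (R : {set V}) (p : V * V) : p \in ES R -> [/\ p.1 \in R, p.2 \in R & e p.1 p.2].
  by rewrite inE => /and3P.
have inj : {in ES (~: K') &, injective phi}.
  move=> [x1 x2] [y1 y2] /inES[/= m1 m2 _] /inES[/= m3 m4 _] [E1 E2].
  by rewrite (swinj _ _ m1 m3 E1) (swinj _ _ m2 m4 E2).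
rewrite -(card_in_imset inj); apply: proper_card; apply/properP; split.
  apply/subsetP => q /imsetP [[x1 x2] /inES[/= x1K' x2K' ex] ->].
  rewrite /phi inE /= (swK _ x1K') (swK _ x2K') /=.
  move: x1K' x2K'; rewrite !inK' /sw => /andP[x1u x1k] /andP[x2u x2k].
  case: (x1 == k) / eqP => [E1|n1]; case: (x2 == k) / eqP => [E2|n2].
  - by rewrite E1 E2 eirr in ex.
  - apply: N; last by rewrite -E1.
    by move: x2k; rewrite (negbTE (introN eqP n2)).
  - rewrite esym; apply: N; last by rewrite -E2 esym.
    by move: x1k; rewrite (negbTE (introN eqP n1)).
  - done.
exists (u, v); first by rewrite !inE /= uK vK euv.
apply/imsetP => -[[x1 x2] /inES[/= x1K' x2K' ex] [E1 E2]].
move: x1K' x2K' E1 E2; rewrite !inK' /sw => /andP[x1u _] /andP[x2u _].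
case: (x1 == k) / eqP => [E1k|n1]; last by move=> E; rewrite E eqxx in x1u.
move=> _.
case: (x2 == k) / eqP => [E2k|n2]; first by move=> E; rewrite E eqxx in uv.
by move=> E; rewrite -E E1k in ex; rewrite esym ex in nvk.
Qed.

End SplitStruct.

Section Bounds.
Variables (V : finType) (e : rel V) (k : nat) (g : {ffun V -> 'I_k}).
Hypothesis esym : symmetric e.
Hypothesis eirr : irreflexive e.
Hypothesis pg : proper_col e g.

Lemma col_bound (X : {set V}) :
  (forall x y, x \in X -> y \in X -> x != y -> e x y \/ g x != g y) -> #|X| <= k.
Proof.
move=> H; have inj : {in X &, injective g}.
  move=> x y xX yX gxy; apply/eqP/negP => /negP xy.
  case: (H x y xX yX xy) => [exy | ].
    by have := (propercP _ _ pg) x y exy; rewrite gxy eqxx.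
  by rewrite gxy eqxx.
rewrite -(card_in_imset inj); apply: leq_trans (max_card _) _; by rewrite card_ord.
Qed.

Lemma clique_bound (K : {set V}) :
  (forall x y, x \in K -> y \in K -> x != y -> e x y) -> #|K| <= k.
Proof. by move=> Kcl; apply: col_bound => x y xK yK xy; left; apply: Kcl. Qed.

Lemma c5_bound (K : {set V}) (f : 'I_5 -> V) : injective f ->
  (forall i j, e (f i) (f j) = c5rel i j) ->
  (forall x y, x \in K -> y \in K -> x != y -> e x y) ->
  (forall x i, x \in K -> e x (f i)) -> #|K| + 3 <= k.
Proof.
move=> finj fe Kcl KC.
have fK i : f i \notin K by apply/negP => H; have := KC _ i H; rewrite eirr.
have ge i j : c5rel i j -> g (f i) != g (f j).
  by move=> c; apply: (propercP _ _ pg); rewrite fe.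
have card3 (a b c : 'I_5) : a != b -> a != c -> b != c ->
    #|f a |: (f b |: (f c |: K))| = #|K| + 3.
  move=> ab ac bc; rewrite !cardsU1 !inE !(inj_eq finj) !fK (negbTE ab) (negbTE ac) (negbTE bc).
  by rewrite (fK a) (fK b) /=; lia.
have gen (a b c : 'I_5) : a != b -> a != c -> b != c ->
   (forall x y, x \in [:: a; b; c] -> y \in [:: a; b; c] -> x != y -> g (f x) != g (f y)) ->
   #|K| + 3 <= k.
  move=> ab ac bc H; rewrite -(card3 a b c) //; apply: col_bound => x y.
  have Hx z : z \in f a |: (f b |: (f c |: K)) -> (exists2 i, i \in [:: a; b; c] & z = f i) \/ z \in K.
    rewrite !inE => /orP[/eqP -> | /orP[/eqP -> | /orP[/eqP -> | zK]]]; last by right.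
    - by left; exists a; rewrite ?inE ?eqxx.
    - by left; exists b; rewrite ?inE ?eqxx ?orbT.
    - by left; exists c; rewrite ?inE ?eqxx ?orbT.
  move=> /Hx [[i iS ->] | xK] /Hx [[j jS ->] | yK] xy.
  - right; apply: H => //; apply: contraNneq xy => ->; done.
  - by left; rewrite esym; apply: KC.
  - by left; apply: KC.
  - by left; apply: Kcl.
case: (boolP (g (f o1) == g (f o4))) => E.
- apply: (gen o2 o3 o4) => // x y; rewrite !inE.
  move=> /orP[/eqP -> | /orP[/eqP -> | /eqP ->]] /orP[/eqP -> | /orP[/eqP -> | /eqP ->]] //.
  all: try by move=> _; apply: ge.
  + by move=> _; rewrite -(eqP E); apply: ge.
  + by move=> _; rewrite -(eqP E) eq_sym; apply: ge.
- apply: (gen o0 o1 o4) => // x y; rewrite !inE.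
  move=> /orP[/eqP -> | /orP[/eqP -> | /eqP ->]] /orP[/eqP -> | /orP[/eqP -> | /eqP ->]] //.
  all: try by move=> _; apply: ge.
  by move=> _; rewrite eq_sym.
Qed.

End Bounds.

Theorem theorem7 (V : finType) (e : rel V) (chi l : nat) :
  simple_graph e ->
  ~ has_induced two_K2 e ->
  ~ has_induced C4 e ->
  is_chromatic_number e chi ->
  chi + 1 <= l ->
  recol_connected e l /\ recol_diam_le e l (4 * #|V|).
Proof.
move=> [esym eirr] n2 n4 [[g pg] _] hl.
have diam : recol_diam_le e l (4 * #|V|).
  case: (classic (hasC5 e)) => [[f [finj fe]] | noC5].
  - have [K [Kcl KC IC Iind]] := c5_struct esym eirr n2 n4 finj fe.
    apply: (c5_diam esym eirr finj fe Kcl KC IC Iind).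
    have := c5_bound esym eirr pg finj fe Kcl KC; lia.
  - have [K [Kcl Iind Inn]] := split_struct esym eirr n2 n4 noC5.
    apply: (split_diam esym eirr Kcl Iind Inn).
    have := clique_bound pg Kcl; lia.
split => // a b pa pb.
by have [s [w ls _]] := diam a b pa pb; exists s.
Qed.
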